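(* Under the hypotheses of Lemma 1 (finite multi-set $\mathcal X=\{X_1,\dots,X_n\}$ of real symmetric $2\times2$ matrices, $\lambda_1$ the unique largest eigenvalue of $\mathcal X$, belonging to $X_1$, with $u_1=e_1$, $v_1=e_2$), let $S=\lim_{m\to\infty}\frac1m\log\sum_{i=1}^n\exp(mX_i)$. Then $e_2$ is an eigenvector of $S$ whose eigenvalue equals $\mu_*$, the largest eigenvalue of $\mathcal X$ (among the eigenvalues $\lambda_i,\mu_i$, excluding the occurrence $\lambda_1$ itself) whose associated eigenvector (i.e. $u_i$ for $\lambda_i$, $v_i$ for $\mu_i$) is not aligned with $e_1$.
   Context: $\exp$ and $\log$ denote the matrix exponential and matrix logarithm. Every real symmetric $2\times2$ matrix $X_i$ is written in spectral form $X_i=\lambda_i u_iu_i^{\mathsf T}+\mu_i v_iv_i^{\mathsf T}$ with $\lambda_i\ge\mu_i$, $u_i=(\cos\varphi_i,\sin\varphi_i)^{\mathsf T}$, $v_i=(-\sin\varphi_i,\cos\varphi_i)^{\mathsf T}$, $\varphi_i\in[-\pi/2,\pi/2]$. ''The eigenvalues of $\mathcal X$'' means the multi-set of all $2n$ numbers $\lambda_1,\mu_1,\dots,\lambda_n,\mu_n$; an eigenvalue is unique if it occurs exactly once in this multi-set. Two unit vectors are aligned if they are equal up to sign. $e_1=(1,0)^{\mathsf T}$, $e_2=(0,1)^{\mathsf T}$. *)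

(* Defs.v *)
From HB Require Import structures.
From mathcomp Require Import all_boot all_order all_algebra.
From mathcomp Require Import all_classical all_reals all_analysis.
Set Implicit Arguments. Unset Strict Implicit. Unset Printing Implicit Defensive.
Import Order.TTheory GRing.Theory Num.Theory.
Import numFieldNormedType.Exports.
Local Open Scope classical_set_scope.
Local Open Scope ring_scope.

Definition expm (R : realType) (n : nat) (A : 'M[R]_n.+1) : 'M[R]_n.+1 :=
  lim (series (fun k : nat => (k`!%:R)^-1 *: A ^+ k) @ \oo).

(* Matrix logarithm (of a symmetric positive definite matrix): the unique real
   symmetric matrix L with expm L = M (chosen by description; 0 if none). *)
Definition logm (R : realType) (n : nat) (M : 'M[R]_n.+1) : 'M[R]_n.+1 :=
  xget 0 [set L : 'M[R]_n.+1 | L^T = L /\ expm L = M].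

Definition e1 (R : realType) : 'cV[R]_2 := \col_i (if i == 0 then 1 else 0).
Definition e2 (R : realType) : 'cV[R]_2 := \col_i (if i == 0 then 0 else 1).

Definition uvec (R : realType) (phi : R) : 'cV[R]_2 :=
  \col_i (if i == 0 then cos phi else sin phi).
Definition vvec (R : realType) (phi : R) : 'cV[R]_2 :=
  \col_i (if i == 0 then - sin phi else cos phi).

Definition aligned (R : realType) (a b : 'cV[R]_2) : Prop := a = b \/ a = - b.

Definition candidate (R : realType) (n : nat) (lam mu phi : 'I_n.+1 -> R)
  (x : R) : Prop :=
  (exists i : 'I_n.+1, i != ord0 /\ ~ aligned (uvec (phi i)) (e1 R) /\ x = lam i)
  \/ (exists i : 'I_n.+1, ~ aligned (vvec (phi i)) (e1 R) /\ x = mu i).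

Definition is_mu_star (R : realType) (n : nat) (lam mu phi : 'I_n.+1 -> R)
  (x : R) : Prop :=
  candidate lam mu phi x /\ forall y, candidate lam mu phi y -> y <= x.

(* Main.v *)
Require Import Defs.
From HB Require Import structures.
From mathcomp Require Import all_boot all_order all_algebra.
From mathcomp Require Import all_classical all_reals all_analysis.
From mathcomp Require Import ring lra.
Import Order.TTheory GRing.Theory Num.Theory.
Import numFieldNormedType.Exports.
Local Open Scope classical_set_scope.
Local Open Scope ring_scope.

Section S.
Variable R : realType.
Definition psys (P Q : 'M[R]_2) :=
  [/\ P * P = P, Q * Q = Q, P * Q = 0, Q * P = 0 & P + Q = 1].

Lemma pow_psys P Q a b k : psys P Q ->
  (a *: P + b *: Q) ^+ k = (a ^+ k) *: P + (b ^+ k) *: Q.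
Proof.
case=> PP QQ PQ QP PQ1; elim: k => [|k IH].
  by rewrite !expr0 !scale1r PQ1.
rewrite exprS IH !mulrDl !mulrDr -!scalerAl -!scalerAr PP QQ PQ QP.
rewrite !scaler0 add0r addr0 !scalerA !exprS.
by [].
Qed.

Lemma expm_psys P Q a b : psys P Q ->
  expm (a *: P + b *: Q) = expR a *: P + expR b *: Q.
Proof.
move=> hP; rewrite /expm.
have -> : series (fun k : nat => (k`!%:R)^-1 *: (a *: P + b *: Q) ^+ k) =
   (fun N => series (exp_coeff a) N *: P + series (exp_coeff b) N *: Q).
  apply/funext => N; rewrite /series /= !scaler_suml -big_split /=.
  apply: eq_bigr => k _; rewrite pow_psys // scalerDr !scalerA /exp_coeff /=.
  by rewrite ![_^-1 * _]mulrC.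
apply: cvg_lim => //.
apply: cvgD; apply: cvgZr_tmp.
- rewrite /expR; exact: is_cvg_series_exp_coeff.
- rewrite /expR; exact: is_cvg_series_exp_coeff.
Qed.
Lemma scale_cancel (a b : R) (X : 'M[R]_2) : a *: X = b *: X -> a = b \/ X = 0.
Proof.
move=> h; have : (a - b) *: X = 0 by rewrite scalerBl h subrr.
by move/eqP; rewrite scaler_eq0 subr_eq0 => /orP[/eqP|/eqP]; [left|right].
Qed.

Lemma log_key (l t : R) (X : 'M[R]_2) : 0 < t ->
  t *: X = expR l *: X -> ln t *: X = l *: X.
Proof.
move=> t0 /scale_cancel [->|->]; last by rewrite !scaler0.
by rewrite expRK.
Qed.

Lemma sAl (a : R) (X Y : 'M[R]_2) : a *: (X * Y) = (a *: X) * Y.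
Proof. exact: scalerAl. Qed.
Lemma sAr (a : R) (X Y : 'M[R]_2) : a *: (X * Y) = X * (a *: Y).
Proof. exact: scalerAr. Qed.

Lemma log_psys (P Q P' Q' : 'M[R]_2) (l1 l2 t1 t2 : R) : psys P Q -> psys P' Q' -> 0 < t1 -> 0 < t2 ->
  expR l1 *: P + expR l2 *: Q = t1 *: P' + t2 *: Q' ->
  l1 *: P + l2 *: Q = ln t1 *: P' + ln t2 *: Q'.
Proof.
move=> [PP QQ PQ QP PQ1] [PP' QQ' PQ' QP' PQ1'] t10 t20 hM.
set M := t1 *: P' + t2 *: Q' in hM.
have P'M : P' * M = t1 *: P' by rewrite mulrDr -!scalerAr PP' PQ' scaler0 addr0.
have Q'M : Q' * M = t2 *: Q' by rewrite mulrDr -!scalerAr QQ' QP' scaler0 add0r.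
have MP : M * P = expR l1 *: P by rewrite -hM mulrDl -!scalerAl PP QP scaler0 addr0.
have MQ : M * Q = expR l2 *: Q by rewrite -hM mulrDl -!scalerAl QQ PQ scaler0 add0r.
have k11 : ln t1 *: (P' * P) = l1 *: (P' * P).
  apply: log_key => //; by rewrite sAl -P'M -mulrA MP sAr.
have k12 : ln t1 *: (P' * Q) = l2 *: (P' * Q).
  apply: log_key => //; by rewrite sAl -P'M -mulrA MQ sAr.
have k21 : ln t2 *: (Q' * P) = l1 *: (Q' * P).
  apply: log_key => //; by rewrite sAl -Q'M -mulrA MP sAr.
have k22 : ln t2 *: (Q' * Q) = l2 *: (Q' * Q).
  apply: log_key => //; by rewrite sAl -Q'M -mulrA MQ sAr.
have hP' : P' * (l1 *: P + l2 *: Q) = ln t1 *: P'.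
  by rewrite mulrDr -!sAr -k11 -k12 !sAr -mulrDr -scalerDr PQ1 -sAr mulr1.
have hQ' : Q' * (l1 *: P + l2 *: Q) = ln t2 *: Q'.
  by rewrite mulrDr -!sAr -k21 -k22 !sAr -mulrDr -scalerDr PQ1 -sAr mulr1.
by rewrite -[LHS]mul1r -PQ1' mulrDl hP' hQ'.
Qed.

Definition Pcs (c s : R) : 'M[R]_2 := \matrix_(i, j)
  (if val i == 0%N then (if val j == 0%N then (1 + c) / 2 else s / 2)
   else (if val j == 0%N then s / 2 else (1 - c) / 2)).

Lemma ord2 (i : 'I_2) : i = ord0 \/ i = ord_max.
Proof. by case: i => [[|[|?]]] ? //=; [left|right]; apply/val_inj. Qed.
Lemma sum2 (F : 'I_2 -> R) : \sum_(k < 2) F k = F ord0 + F ord_max.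
Proof.
rewrite !big_ord_recl big_ord0 addr0; congr (_ + F _); exact/val_inj.
Qed.
Ltac mx2 := apply/matrixP; intros i j; case: (ord2 i) => ->; case: (ord2 j) => ->.

Lemma Pcs_psys c s : c ^+ 2 + s ^+ 2 = 1 -> psys (Pcs c s) (Pcs (- c) (- s)).
Proof.
move=> h; split; mx2; rewrite !mxE /=. all: try (rewrite sum2 !mxE /=). all: lra.

Qed.

Lemma Pcs_sym c s : (Pcs c s)^T = Pcs c s.
Proof. by mx2; rewrite !mxE. Qed.

Lemma spec_formula (L : 'M[R]_2) : L ord0 ord_max = L ord_max ord0 ->
  let h := (L ord0 ord0 - L ord_max ord_max) / 2 in
  let r := Num.sqrt (h ^+ 2 + L ord0 ord_max ^+ 2) in
  r != 0 ->
  (h / r) ^+ 2 + (L ord0 ord_max / r) ^+ 2 = 1 /\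
  L = ((L ord0 ord0 + L ord_max ord_max) / 2 + r) *: Pcs (h / r) (L ord0 ord_max / r)
    + ((L ord0 ord0 + L ord_max ord_max) / 2 - r) *: Pcs (- (h / r)) (- (L ord0 ord_max / r)).
Proof.
move=> hs h r r0.
have r2 : r ^+ 2 = h ^+ 2 + L ord0 ord_max ^+ 2 by rewrite sqr_sqrtr // addr_ge0 // sqr_ge0.
split.
  have e : (h / r) ^+ 2 + (L ord0 ord_max / r) ^+ 2 = (h ^+ 2 + L ord0 ord_max ^+ 2) / r ^+ 2.
    by field.
  by rewrite e -r2 divff // sqrf_eq0.
mx2; rewrite !mxE /= ?hs; rewrite /h; field; exact: r0.
Qed.

Lemma spec_sym (L : 'M[R]_2) : L ord0 ord_max = L ord_max ord0 ->
  exists l1 l2 c s, c ^+ 2 + s ^+ 2 = 1 /\ L = l1 *: Pcs c s + l2 *: Pcs (- c) (- s).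
Proof.
move=> hs.
set h := (L ord0 ord0 - L ord_max ord_max) / 2.
set r := Num.sqrt (h ^+ 2 + L ord0 ord_max ^+ 2).
have [r0|r0] := eqVneq r 0; last first.
  have [h1 h2] := @spec_formula L hs r0.
  by do 4 eexists; split; [exact: h1|exact: h2].
have r2 : h ^+ 2 + L ord0 ord_max ^+ 2 = 0.
  by rewrite -[LHS]sqr_sqrtr ?addr_ge0 ?sqr_ge0 // -/r r0 expr0n.
have hb : L ord0 ord_max = 0 /\ h = 0.
  have := sqr_ge0 h; have := sqr_ge0 (L ord0 ord_max).
  move: r2; set u := h ^+ 2; set v := L ord0 ord_max ^+ 2 => r2 hv hu.
  have u0 : u = 0 by lra.
  have v0 : v = 0 by lra.
  by move: u0 v0; rewrite /u /v => /eqP; rewrite sqrf_eq0 => /eqP -> /eqP; rewrite sqrf_eq0 => /eqP ->.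
case: hb => hb hh.
exists (L ord0 ord0), (L ord0 ord0), 1, 0; split; first by rewrite expr1n expr0n addr0.
move: hh; rewrite /h => hh.
mx2; rewrite !mxE /= ?hs ?hb; rewrite -?hs ?hb; lra.
Qed.

Lemma logm_char (M : 'M[R]_2) (t1 t2 c s : R) : c ^+ 2 + s ^+ 2 = 1 -> 0 < t1 -> 0 < t2 ->
  M = t1 *: Pcs c s + t2 *: Pcs (- c) (- s) ->
  logm M = ln t1 *: Pcs c s + ln t2 *: Pcs (- c) (- s).
Proof.
move=> hcs t10 t20 hM; rewrite /logm; apply: xget_unique.
  split; first by rewrite linearD !linearZ /= !Pcs_sym.
  have e1 : expR (ln t1) = t1 by apply: lnK; rewrite posrE.
  have e2 : expR (ln t2) = t2 by apply: lnK; rewrite posrE.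
  rewrite (expm_psys _ _ _ _ (Pcs_psys _ _ hcs)) hM; congr (_ *: _ + _ *: _); [exact: e1|exact: e2].
move=> L [hL hE].
have hs : L ord0 ord_max = L ord_max ord0 by rewrite -{1}hL mxE.
have [l1 [l2 [c' [s' [hcs' eL]]]]] := spec_sym _ hs.
rewrite eL; apply: log_psys; [exact: (Pcs_psys _ _ hcs')|exact: (Pcs_psys _ _ hcs)|done|done|].
by rewrite -(expm_psys _ _ _ _ (Pcs_psys _ _ hcs')) -eL hE.
Qed.
End S.

Lemma cvg_bound (R : realType) (u : nat -> R) (l K : R) (m0 : nat) :
  (forall m : nat, (m0 <= m)%N -> `|u m - l| <= K / m%:R) -> u @ \oo --> l.
Proof.
move=> H; apply/cvgrPdist_le => e e0.
near=> m.
rewrite distrC; apply: le_trans (H m _) _.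
  by near: m; apply: nbhs_infty_ge.
have m0' : (0 < m)%N by near: m; apply: nbhs_infty_gt.
have hm : (Num.truncn (`|K| / e)).+1%:R <= m%:R :> R.
  by rewrite ler_nat; near: m; apply: nbhs_infty_ge.
have := truncnS_gt (`|K| / e) => hk.
have mpos : 0 < m%:R :> R by rewrite ltr0n.
rewrite ler_pdivrMr //.
have : `|K| / e < m%:R by apply: lt_le_trans hk hm.
rewrite ltr_pdivrMr // => h.
apply: le_trans (ler_norm K) _; rewrite mulrC; exact: ltW.
Unshelve. all: by end_near. Qed.

Lemma sum_const_le (R : realType) (T : finType) (f : T -> R) (k : R) :
  (forall t, f t <= k) -> \sum_t f t <= #|T|%:R * k.
Proof.
move=> h; apply: le_trans (ler_sum _ (fun t _ => h t)) _.
by rewrite sumr_const mulr_natl.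
Qed.
Lemma sum_const_le_D1 (R : realType) (T : finType) (t0 : T) (f : T -> R) (k : R) :
  0 <= k -> (forall t, t != t0 -> f t <= k) -> \sum_(t | t != t0) f t <= #|T|%:R * k.
Proof.
move=> k0 h; apply: le_trans (ler_sum _ (fun t ht => h t ht)) _.
rewrite sumr_const -[k *+ _]mulr_natl; apply: ler_wpM2r => //; rewrite ler_nat; exact: max_card.
Qed.
Lemma ln_bound (R : realType) (u L lo hi : R) (m : nat) : (0 < m)%N -> 0 < lo ->
  lo * expR (m%:R * L) <= u <= hi * expR (m%:R * L) ->
  `|ln u / m%:R - L| <= (`|ln lo| + `|ln hi|) / m%:R.
Proof.
move=> m0 lo0 /andP[h1 h2].
have e0 := expR_gt0 (m%:R * L).
have mp : 0 < m%:R :> R by rewrite ltr0n.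
set q := u / expR (m%:R * L).
have q1 : lo <= q by rewrite /q ler_pdivlMr.
have q2 : q <= hi by rewrite /q ler_pdivrMr.
have q0 : 0 < q by apply: lt_le_trans q1.
have hi0 : 0 < hi by apply: lt_le_trans q2.
have eu : u = expR (m%:R * L) * q by rewrite /q mulrC divfK ?gt_eqF.
have -> : ln u / m%:R - L = ln q / m%:R.
  rewrite eu lnM ?posrE // expRK mulrDl mulrAC divff ?gt_eqF // mul1r.
  by rewrite addrAC subrr add0r.
rewrite normrM (@gtr0_norm _ (m%:R^-1)) ?invr_gt0 // ler_pM2r ?invr_gt0 //.
have l1 : ln lo <= ln q by rewrite ler_ln ?posrE.
have l2 : ln q <= ln hi by rewrite ler_ln ?posrE.
have := ler_norm (ln hi); have := ler_norm (- ln lo); rewrite normrN.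
have := normr_ge0 (ln lo); have := normr_ge0 (ln hi).
rewrite ler_norml; lra.
Qed.

Section Asym.
Variable R : realType.
Variables (T : finType) (a x y : T -> R) (t0 ts : T) (Lam dl c : R).
Hypotheses (hxy : forall t, x t ^+ 2 + y t ^+ 2 = 1) (ha0 : a t0 = Lam)
  (hy0 : y t0 = 0) (hd : 0 < dl) (hgap : forall t, t != t0 -> a t <= Lam - dl)
  (hys : y ts != 0) (has : a ts = c) (hmax : forall t, y t != 0 -> a t <= c).

Definition EE (m : nat) t := expR (m%:R * a t).
Definition AA m := \sum_t EE m t * x t ^+ 2.
Definition BB m := \sum_t EE m t * (x t * y t).
Definition CC m := \sum_t EE m t * y t ^+ 2.
Definition hh m := (AA m - CC m) / 2.
Definition rr m := Num.sqrt (hh m ^+ 2 + BB m ^+ 2).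
Definition tp m := (AA m + CC m) / 2 + rr m.
Definition tm m := (AA m + CC m) / 2 - rr m.
Definition NN : R := #|T|%:R.
Definition al m := expR (m%:R * Lam).
Definition ga m := expR (m%:R * c).
Definition ep m := expR (- (m%:R * dl)).

Lemma x0sq : x t0 ^+ 2 = 1.
Proof. by have := hxy t0; rewrite hy0 expr0n /= addr0. Qed.
Lemma x2le t : x t ^+ 2 <= 1.
Proof. have := hxy t; have := sqr_ge0 (y t); lra. Qed.
Lemma y2le t : y t ^+ 2 <= 1.
Proof. have := hxy t; have := sqr_ge0 (x t); lra. Qed.
Lemma xyle t : `|x t * y t| <= 1.
Proof.
have := hxy t; have := sqr_ge0 (x t - y t); have := sqr_ge0 (x t + y t).
rewrite ler_norml => h1 h2 h3; apply/andP; split; nra.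
Qed.
Lemma ts_neq : ts != t0.
Proof. by apply: contra hys => /eqP ->; rewrite hy0. Qed.
Lemma c_le : c <= Lam - dl.
Proof. rewrite -has; exact: hgap _ ts_neq. Qed.
Lemma NN_ge1 : 1 <= NN.
Proof. rewrite /NN (ler_nat _ 1); apply/card_gt0P; by exists t0. Qed.

Lemma EE_gt0 m t : 0 < EE m t. Proof. exact: expR_gt0. Qed.
Lemma EE0 m : EE m t0 = al m. Proof. by rewrite /EE ha0. Qed.
Lemma EEgap m t : t != t0 -> EE m t <= al m * ep m.
Proof.
move=> ht; rewrite /EE /al /ep -expRD ler_expR.
have := hgap _ ht; have : 0 <= m%:R :> R by [].
nra.
Qed.
Lemma EEc m t : y t != 0 -> EE m t <= ga m.
Proof.
move=> ht; rewrite /EE /ga ler_expR.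
have := hmax _ ht; have : 0 <= m%:R :> R by []. nra.
Qed.
Lemma ga_le m : ga m <= al m * ep m.
Proof.
rewrite /ga /al /ep -expRD ler_expR.
have := c_le; have : 0 <= m%:R :> R by []. nra.
Qed.
Lemma al_gt0 m : 0 < al m. Proof. exact: expR_gt0. Qed.
Lemma ga_gt0 m : 0 < ga m. Proof. exact: expR_gt0. Qed.
Lemma ep_gt0 m : 0 < ep m. Proof. exact: expR_gt0. Qed.
Lemma ep_le1 m : ep m <= 1.
Proof.
rewrite /ep -expR0 ler_expR oppr_le0; apply: mulr_ge0 => //; exact: ltW.
Qed.
Lemma ep_le m : (0 < m)%N -> ep m <= (m%:R * dl)^-1.
Proof.
move=> m0; rewrite /ep expRN.
have hm : 0 < m%:R * dl by rewrite mulr_gt0 // ltr0n.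
rewrite lef_pV2 ?posrE ?expR_gt0 //.
have := expR_ge1Dx (m%:R * dl); lra.
Qed.

Lemma AA_ge m : al m <= AA m.
Proof.
rewrite /AA (bigD1 t0) //= EE0 x0sq mulr1 lerDl.
apply: sumr_ge0 => t _; apply: mulr_ge0; [exact: ltW (EE_gt0 _ _)|exact: sqr_ge0].
Qed.
Lemma AA_le m : AA m <= al m + NN * (al m * ep m).
Proof.
rewrite /AA (bigD1 t0) //= EE0 x0sq mulr1 lerD2l.
apply: sum_const_le_D1.
  by apply: mulr_ge0; apply: ltW; [exact: al_gt0|exact: ep_gt0].
move=> t ht; apply: le_trans (_ : EE m t * 1 <= _); last by rewrite mulr1; exact: EEgap.
by apply: ler_wpM2l; [exact: ltW (EE_gt0 _ _)|exact: x2le].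
Qed.
Lemma CC_ge0 m : 0 <= CC m.
Proof.
apply: sumr_ge0 => t _; apply: mulr_ge0; [exact: ltW (EE_gt0 _ _)|exact: sqr_ge0].
Qed.
Lemma CC_le m : CC m <= NN * ga m.
Proof.
apply: sum_const_le => t.
have [->|ht] := eqVneq (y t) 0.
  by rewrite expr0n /= mulr0; exact: ltW (ga_gt0 _).
apply: le_trans (_ : EE m t * 1 <= _); last by rewrite mulr1; exact: EEc.
by apply: ler_wpM2l; [exact: ltW (EE_gt0 _ _)|exact: y2le].
Qed.
Lemma CC_ge m : ga m * y ts ^+ 2 <= CC m.
Proof.
rewrite /CC (bigD1 ts) //=.
rewrite /EE has -/(ga m) lerDl.
by apply: sumr_ge0 => t _; apply: mulr_ge0; [exact: ltW (EE_gt0 _ _)|exact: sqr_ge0].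
Qed.
Lemma BB_le m : `|BB m| <= NN * ga m.
Proof.
apply: le_trans (ler_norm_sum _ _ _) _; apply: sum_const_le => t.
have [->|ht] := eqVneq (y t) 0.
  by rewrite mulr0 mulr0 normr0; exact: ltW (ga_gt0 _).
rewrite normrM (gtr0_norm (EE_gt0 _ _)).
apply: le_trans (_ : EE m t * 1 <= _); last by rewrite mulr1; exact: EEc.
by apply: ler_wpM2l; [exact: ltW (EE_gt0 _ _)|exact: xyle].
Qed.
Lemma rr2 m : rr m ^+ 2 = hh m ^+ 2 + BB m ^+ 2.
Proof. by rewrite sqr_sqrtr // addr_ge0 // sqr_ge0. Qed.
Lemma rr_ge m : `|hh m| <= rr m.
Proof. by rewrite -sqrtr_sqr ler_sqrt ?lerDl ?sqr_ge0 // addr_ge0 // sqr_ge0. Qed.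
Lemma rr_le m : rr m <= `|hh m| + `|BB m|.
Proof.
rewrite -[leRHS]ger0_norm ?addr_ge0 // -sqrtr_sqr ler_sqrt ?sqr_ge0 //.
have e1 : `|hh m| ^+ 2 = hh m ^+ 2 by rewrite -normrX ger0_norm ?sqr_ge0.
have e2 : `|BB m| ^+ 2 = BB m ^+ 2 by rewrite -normrX ger0_norm ?sqr_ge0.
rewrite sqrrD e1 e2 lerD2r lerDl; apply: mulrn_wge0; apply: mulr_ge0 => //.
Qed.
Lemma tptm m : tp m * tm m = AA m * CC m - BB m ^+ 2.
Proof.
rewrite /tp /tm.
have -> : ((AA m + CC m) / 2 + rr m) * ((AA m + CC m) / 2 - rr m) =
  ((AA m + CC m) / 2) ^+ 2 - rr m ^+ 2 by ring.
by rewrite rr2 /hh; field.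
Qed.

Lemma ev_ep q : 0 < q -> exists m0, forall m, (m0 <= m)%N -> (0 < m)%N /\ ep m <= q.
Proof.
move=> q0; exists (Num.truncn ((q * dl)^-1)).+1 => m hm; split.
  exact: leq_trans hm.
have m0 : (0 < m)%N by exact: leq_trans hm.
apply: le_trans (ep_le _ m0) _.
have hqd : 0 < q * dl by rewrite mulr_gt0.
have h1 := truncnS_gt ((q * dl)^-1).
have h2 : (Num.truncn ((q * dl)^-1)).+1%:R <= m%:R :> R by rewrite ler_nat.
have h3 : (q * dl)^-1 < m%:R by apply: lt_le_trans h1 h2.
rewrite -[leRHS]invrK lef_pV2 ?posrE ?mulr_gt0 ?ltr0n ?invr_gt0 //.
have e : q^-1 = (q * dl)^-1 * dl by rewrite invfM -mulrA mulVf ?gt_eqF // mulr1.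
by rewrite e ler_pM2r //; exact: ltW.
Qed.
Section Good.
Variable m : nat.
Hypotheses (hm : (0 < m)%N) (he1 : NN * ep m <= 1/4)
  (he2 : NN ^+ 2 * ep m <= y ts ^+ 2 / 2).

Lemma g_aep : NN * (al m * ep m) <= al m / 4.
Proof.
rewrite mulrCA; apply: ler_wpM2l; first exact: ltW (al_gt0 _).
by rewrite -div1r.
Qed.
Lemma g_Cle : CC m <= NN * (al m * ep m).
Proof.
apply: le_trans (CC_le m) _; apply: ler_wpM2l; first exact: ler0n.
exact: ga_le.
Qed.
Lemma g_Ble : `|BB m| <= NN * (al m * ep m).
Proof.
apply: le_trans (BB_le m) _; apply: ler_wpM2l; first exact: ler0n.
exact: ga_le.
Qed.
Lemma g_hh : 3 / 8 * al m <= hh m.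
Proof.
have := g_aep; have := g_Cle; have := AA_ge m; rewrite /hh; lra.
Qed.
Lemma g_rr : 3 / 8 * al m <= rr m.
Proof.
apply: le_trans g_hh _; apply: le_trans (rr_ge m); exact: ler_norm.
Qed.
Lemma g_rr_gt0 : 0 < rr m.
Proof. apply: lt_le_trans g_rr; apply: mulr_gt0 => //; exact: al_gt0. Qed.
Lemma g_tp_ge : al m <= tp m.
Proof.
have := rr_ge m; have := ler_norm (hh m); have := AA_ge m; rewrite /tp /hh; lra.
Qed.
Lemma g_tp_le : tp m <= 3 / 2 * al m.
Proof.
have h0 : 0 <= hh m by apply: le_trans g_hh; apply: mulr_ge0 => //; exact: ltW (al_gt0 _).
have := rr_le m; rewrite (ger0_norm h0).
have := g_Ble; have := g_aep; have := AA_le m; rewrite /tp /hh; lra.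
Qed.
Lemma g_tm_le : tm m <= NN * ga m.
Proof.
have h0 : 0 <= hh m by apply: le_trans g_hh; apply: mulr_ge0 => //; exact: ltW (al_gt0 _).
have := rr_ge m; rewrite (ger0_norm h0).
have := CC_le m; rewrite /tm /hh; lra.
Qed.
Lemma g_det : al m * ga m * (y ts ^+ 2 / 2) <= AA m * CC m - BB m ^+ 2.
Proof.
have hA : al m * (ga m * y ts ^+ 2) <= AA m * CC m.
  apply: ler_pM; [exact: ltW (al_gt0 _)| |exact: AA_ge|exact: CC_ge].
  by apply: mulr_ge0; [exact: ltW (ga_gt0 _)|exact: sqr_ge0].
have hB : BB m ^+ 2 <= al m * ga m * (NN ^+ 2 * ep m).
  rewrite -(ger0_norm (sqr_ge0 (BB m))) normrX expr2.
  apply: le_trans (_ : (NN * ga m) * (NN * (al m * ep m)) <= _).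
    apply: ler_pM; [exact: normr_ge0|exact: normr_ge0|exact: BB_le|exact: g_Ble].
  by rewrite le_eqVlt; apply/orP; left; apply/eqP; ring.
have hC : al m * ga m * (NN ^+ 2 * ep m) <= al m * ga m * (y ts ^+ 2 / 2).
  apply: ler_wpM2l => //; apply: mulr_ge0; apply: ltW; [exact: al_gt0|exact: ga_gt0].
have e : al m * (ga m * y ts ^+ 2) = al m * ga m * (y ts ^+ 2 / 2) * 2 by field.
lra.
Qed.
Lemma g_tm_ge : ga m * (y ts ^+ 2 / 3) <= tm m.
Proof.
have tp0 : 0 < tp m by apply: lt_le_trans g_tp_ge; exact: al_gt0.
have etm : tm m = (AA m * CC m - BB m ^+ 2) / tp m.
  by rewrite -tptm mulrC mulKf ?gt_eqF.
rewrite etm ler_pdivlMr //.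
apply: le_trans g_det.
have h1 := g_tp_le; have al0 := al_gt0 m; have ga0 := ga_gt0 m.
have y0 := sqr_ge0 (y ts).
have : ga m * (y ts ^+ 2 / 3) * tp m <= ga m * (y ts ^+ 2 / 3) * (3 / 2 * al m).
  apply: ler_wpM2l => //; apply: mulr_ge0; [exact: ltW|]; apply: mulr_ge0 => //.
move=> h2; apply: le_trans h2 _.
by rewrite le_eqVlt; apply/orP; left; apply/eqP; field.
Qed.
Lemma g_c : `|hh m / rr m - 1| <= 8 / 3 * NN * ep m.
Proof.
have r0 := g_rr_gt0.
have h0 : 0 <= hh m by apply: le_trans g_hh; apply: mulr_ge0 => //; exact: ltW (al_gt0 _).
have e : hh m / rr m - 1 = - ((rr m - hh m) / rr m) by field; rewrite gt_eqF.
rewrite e normrN ger0_norm; last first.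
  by apply: divr_ge0; [have := rr_ge m; rewrite ger0_norm //; lra|exact: ltW].
rewrite ler_pdivrMr //.
have := rr_le m; rewrite ger0_norm // => h1.
apply: le_trans (_ : NN * (al m * ep m) <= _).
  have := g_Ble; lra.
have := g_rr; have a0 := al_gt0 m.
have : 0 <= NN * ep m by apply: mulr_ge0; [exact: ler0n|exact: ltW (ep_gt0 _)].
move=> h2 h3.
have : 8 / 3 * NN * ep m * (3 / 8 * al m) <= 8 / 3 * NN * ep m * rr m.
  apply: ler_wpM2l => //; have : 0 <= 8 / 3 :> R by []; nra.
move=> h4; apply: le_trans h4.
by rewrite le_eqVlt; apply/orP; left; apply/eqP; field.
Qed.
Lemma g_s : `|BB m / rr m - 0| <= 8 / 3 * NN * ep m.
Proof.
have r0 := g_rr_gt0.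
rewrite subr0 normrM normfV (gtr0_norm r0) ler_pdivrMr //.
apply: le_trans g_Ble _.
have := g_rr; have a0 := al_gt0 m.
have : 0 <= NN * ep m by apply: mulr_ge0; [exact: ler0n|exact: ltW (ep_gt0 _)].
move=> h2 h3.
have : 8 / 3 * NN * ep m * (3 / 8 * al m) <= 8 / 3 * NN * ep m * rr m.
  apply: ler_wpM2l => //; have : 0 <= 8 / 3 :> R by []; nra.
move=> h4; apply: le_trans h4.
by rewrite le_eqVlt; apply/orP; left; apply/eqP; field.
Qed.
Lemma g_lp : `|ln (tp m) / m%:R - Lam| <= (`|ln 1| + `|ln (3/2)|) / m%:R.
Proof.
apply: ln_bound => //; rewrite mul1r -/(al m); apply/andP; split.
  exact: g_tp_ge.
exact: g_tp_le.
Qed.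
Lemma g_lm : `|ln (tm m) / m%:R - c| <= (`|ln (y ts ^+ 2 / 3)| + `|ln NN|) / m%:R.
Proof.
apply: ln_bound => //.
  by apply: divr_gt0 => //; rewrite lt_neqAle sqr_ge0 andbT eq_sym sqrf_eq0.
rewrite -/(ga m); apply/andP; split; first by rewrite mulrC; exact: g_tm_ge.
exact: g_tm_le.
Qed.
End Good.

Lemma ev_good : exists m0, forall m, (m0 <= m)%N ->
  [/\ (0 < m)%N, NN * ep m <= 1/4 & NN ^+ 2 * ep m <= y ts ^+ 2 / 2].
Proof.
have N1 := NN_ge1.
have N0 : 0 < NN by apply: lt_le_trans N1.
have ys0 : 0 < y ts ^+ 2 by rewrite lt_neqAle sqr_ge0 andbT eq_sym sqrf_eq0.
have [m1 h1] := ev_ep ((4 * NN)^-1) (ltac:(by rewrite invr_gt0 mulr_gt0)).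
have [m2 h2] := ev_ep (y ts ^+ 2 / (2 * NN ^+ 2))
  (ltac:(by rewrite divr_gt0 // mulr_gt0 // exprn_gt0)).
exists (maxn m1 m2) => m hm.
have [hm0 e1] := h1 m (leq_trans (leq_maxl _ _) hm).
have [_ e2] := h2 m (leq_trans (leq_maxr _ _) hm).
split => //.
  apply: le_trans (ler_wpM2l (ltW N0) e1) _.
  by rewrite le_eqVlt; apply/orP; left; apply/eqP; field; rewrite gt_eqF.
apply: le_trans (ler_wpM2l (ltW (exprn_gt0 2 N0)) e2) _.
by rewrite le_eqVlt; apply/orP; left; apply/eqP; field; rewrite gt_eqF.
Qed.

Lemma asym_main : exists m0 : nat,
  (forall m, (m0 <= m)%N -> 0 < rr m /\ 0 < tm m) /\
  [/\ (fun m => ln (tp m) / m%:R) @ \oo --> Lam,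
      (fun m => ln (tm m) / m%:R) @ \oo --> c,
      (fun m => hh m / rr m) @ \oo --> (1 : R) &
      (fun m => BB m / rr m) @ \oo --> (0 : R)].
Proof.
have [m0 hg] := ev_good.
exists m0; split.
  move=> m /hg [h1 h2 h3]; split; first exact: (g_rr_gt0 _ h2).
  apply: lt_le_trans (g_tm_ge _ h2 h3).
  apply: mulr_gt0; first exact: ga_gt0.
  by apply: divr_gt0 => //; rewrite lt_neqAle sqr_ge0 andbT eq_sym sqrf_eq0.
have epb m : (m0 <= m)%N -> 8 / 3 * NN * ep m <= (8 / 3 * NN / dl) / m%:R.
  move=> /hg [h1 _ _].
  have mp : 0 < m%:R :> R by rewrite ltr0n.
  apply: le_trans (_ : 8 / 3 * NN * (m%:R * dl)^-1 <= _).
    apply: ler_wpM2l; last exact: ep_le.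
    apply: mulr_ge0 => //; exact: ler0n.
  by rewrite le_eqVlt; apply/orP; left; apply/eqP; field; rewrite ?gt_eqF.
split.
- apply: (@cvg_bound _ _ _ _ m0) => m /hg [h1 h2 h3]; exact: (g_lp _ h1 h2).
- apply: (@cvg_bound _ _ _ _ m0) => m /hg [h1 h2 h3]; exact: (g_lm _ h1 h2 h3).
- apply: (@cvg_bound _ _ _ _ m0) => m hm; have [h1 h2 h3] := hg m hm.
  apply: le_trans (g_c _ h2) _; exact: epb.
- apply: (@cvg_bound _ _ _ _ m0) => m hm; have [h1 h2 h3] := hg m hm.
  apply: le_trans (g_s _ h2) _; exact: epb.
Qed.
End Asym.

Arguments Pcs {R}.
Ltac mx2 := apply/matrixP; intros i j; case: (ord2 i) => ->; case: (ord2 j) => ->.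
Lemma fin_argmax (R : realType) (T : finType) (P : pred T) (f : T -> R) t1 :
  P t1 -> exists t, P t /\ forall u, P u -> f u <= f t.
Proof.
move=> h; case: (@arg_maxP _ _ T t1 P f h) => t Pt ht; exists t; split => //.
Qed.
Section M.
Variable R : realType.
Lemma uvec0 (p : R) : uvec p ord0 ord0 = cos p. Proof. by rewrite mxE. Qed.
Lemma uvec1 (p : R) : uvec p ord_max ord0 = sin p. Proof. by rewrite mxE. Qed.
Lemma vvec0 (p : R) : vvec p ord0 ord0 = - sin p. Proof. by rewrite mxE. Qed.
Lemma vvec1 (p : R) : vvec p ord_max ord0 = cos p. Proof. by rewrite mxE. Qed.
Lemma e10 : e1 R ord0 ord0 = 1. Proof. by rewrite mxE. Qed.
Lemma e11 : e1 R ord_max ord0 = 0. Proof. by rewrite mxE. Qed.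
Lemma e20 : e2 R ord0 ord0 = 0. Proof. by rewrite mxE. Qed.
Lemma e21 : e2 R ord_max ord0 = 1. Proof. by rewrite mxE. Qed.

Lemma colext (w w' : 'cV[R]_2) : w ord0 ord0 = w' ord0 ord0 ->
  w ord_max ord0 = w' ord_max ord0 -> w = w'.
Proof.
move=> h0 h1; apply/matrixP => i j; rewrite (ord1 j).
by case: (ord2 i) => ->.
Qed.

Lemma aligned_iff (w : 'cV[R]_2) : (w ord0 ord0) ^+ 2 + (w ord_max ord0) ^+ 2 = 1 ->
  (aligned w (e1 R) <-> w ord_max ord0 = 0).
Proof.
move=> h; split.
  by case=> ->; rewrite ?mxE /= ?oppr0.
move=> h1; move: h; rewrite h1 expr0n /= addr0 => /eqP; rewrite sqrf_eq1.
case/orP => /eqP h0; [left|right]; apply: colext; rewrite ?mxE ?e10 ?e11 ?h0 ?h1 //.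
by rewrite oppr0.
Qed.

Lemma uu (p : R) : uvec p *m (uvec p)^T = Pcs (cos p ^+ 2 - sin p ^+ 2) (2 * (cos p * sin p)).
Proof.
have := cos2Dsin2 p => h.
mx2; rewrite !mxE big_ord1 !mxE /=; lra.
Qed.
Lemma vv (p : R) : vvec p *m (vvec p)^T = Pcs (- (cos p ^+ 2 - sin p ^+ 2)) (- (2 * (cos p * sin p))).
Proof.
have := cos2Dsin2 p => h.
mx2; rewrite !mxE big_ord1 !mxE /=; lra.
Qed.
Lemma cs_unit (p : R) : (cos p ^+ 2 - sin p ^+ 2) ^+ 2 + (2 * (cos p * sin p)) ^+ 2 = 1.
Proof.
have -> : (cos p ^+ 2 - sin p ^+ 2) ^+ 2 + (2 * (cos p * sin p)) ^+ 2 =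
  (cos p ^+ 2 + sin p ^+ 2) ^+ 2 by ring.
by rewrite cos2Dsin2 expr1n.
Qed.

Lemma Pcs_lin (c s : R) : Pcs c s = Pcs 0 0 + c *: (Pcs 1 0 - Pcs 0 0) + s *: (Pcs 0 1 - Pcs 0 0).
Proof. mx2; rewrite !mxE /=; lra. Qed.

Lemma Pcs_cvg (u v : nat -> R) (u0 v0 : R) : u @ \oo --> u0 -> v @ \oo --> v0 ->
  (fun m => Pcs (u m) (v m)) @ \oo --> Pcs u0 v0.
Proof.
move=> hu hv.
rewrite [X in _ --> X]Pcs_lin.
under eq_fun do rewrite Pcs_lin.
apply: cvgD; [apply: cvgD; [exact: cvg_cst|]|]; exact: cvgZr_tmp.
Qed.

Definition cu (p : R) := cos p ^+ 2 - sin p ^+ 2.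
Definition su (p : R) := 2 * (cos p * sin p).

Lemma ent (p l1 l2 : R) :
  let M := l1 *: Pcs (cu p) (su p) + l2 *: Pcs (- cu p) (- su p) in
  [/\ M ord0 ord0 = l1 * cos p ^+ 2 + l2 * (- sin p) ^+ 2,
      M ord0 ord_max = l1 * (cos p * sin p) + l2 * (- sin p * cos p),
      M ord_max ord0 = l1 * (cos p * sin p) + l2 * (- sin p * cos p) &
      M ord_max ord_max = l1 * sin p ^+ 2 + l2 * cos p ^+ 2].
Proof.
have h := cos2Dsin2 p.
have e1 : (1 + cu p) / 2 = cos p ^+ 2 by rewrite /cu; lra.
have e2 : (1 + - cu p) / 2 = (- sin p) ^+ 2 by rewrite sqrrN /cu; lra.
have e3 : (1 - cu p) / 2 = sin p ^+ 2 by rewrite /cu; lra.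
have e4 : (1 - - cu p) / 2 = cos p ^+ 2 by rewrite /cu; lra.
have e5 : su p / 2 = cos p * sin p by rewrite /su; lra.
have e6 : - su p / 2 = - sin p * cos p by rewrite /su mulNr mulrC; lra.
by rewrite /= !mxE /= e1 e2 e4 e5 e6 sqrrN.
Qed.

Lemma spec_formula2 (L : 'M[R]_2) (A B C : R) :
  L ord0 ord0 = A -> L ord0 ord_max = B -> L ord_max ord0 = B -> L ord_max ord_max = C ->
  Num.sqrt (((A - C) / 2) ^+ 2 + B ^+ 2) != 0 ->
  (((A - C) / 2) / Num.sqrt (((A - C) / 2) ^+ 2 + B ^+ 2)) ^+ 2 +
    (B / Num.sqrt (((A - C) / 2) ^+ 2 + B ^+ 2)) ^+ 2 = 1 /\
  L = ((A + C) / 2 + Num.sqrt (((A - C) / 2) ^+ 2 + B ^+ 2)) *: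
        Pcs (((A - C) / 2) / Num.sqrt (((A - C) / 2) ^+ 2 + B ^+ 2))
            (B / Num.sqrt (((A - C) / 2) ^+ 2 + B ^+ 2))
    + ((A + C) / 2 - Num.sqrt (((A - C) / 2) ^+ 2 + B ^+ 2)) *:
        Pcs (- (((A - C) / 2) / Num.sqrt (((A - C) / 2) ^+ 2 + B ^+ 2)))
            (- (B / Num.sqrt (((A - C) / 2) ^+ 2 + B ^+ 2))).
Proof.
move=> hA hB hB' hC.
have hs : L ord0 ord_max = L ord_max ord0 by rewrite hB hB'.
have := @spec_formula R L hs; rewrite /= hA hB hC; exact.
Qed.
End M.
Arguments cu {R}.
Arguments su {R}.

Theorem lemma4 (R : realType) (n : nat) (X : 'I_n.+1 -> 'M[R]_2)
  (lam mu phi : 'I_n.+1 -> R)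
  (hspec : forall i, X i = lam i *: (uvec (phi i) *m (uvec (phi i))^T)
                          + mu i *: (vvec (phi i) *m (vvec (phi i))^T))
  (horder : forall i, mu i <= lam i)
  (hphi : forall i, - (pi / 2) <= phi i <= pi / 2)
  (hlam_top : forall i, mu i < lam ord0)
  (hlam_uniq : forall i, i != ord0 -> lam i < lam ord0)
  (hu1 : uvec (phi ord0) = e1 R) :
  exists S : 'M[R]_2,
    ((fun m : nat => (m%:R)^-1 *: logm (\sum_i expm (m%:R *: X i))) @ \oo --> S)
    /\ forall mustar, is_mu_star lam mu phi mustar -> S *m e2 R = mustar *: e2 R.
Proof.
have hc0 : cos (phi ord0) = 1.
  by have := congr1 (fun w : 'cV[R]_2 => w ord0 ord0) hu1; rewrite /= uvec0 e10.
have hs0 : sin (phi ord0) = 0.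
  by have := congr1 (fun w : 'cV[R]_2 => w ord_max ord0) hu1; rewrite /= uvec1 e11.
pose T := ('I_n.+1 * bool)%type.
pose a := fun t : T => if t.2 then lam t.1 else mu t.1.
pose xx := fun t : T => if t.2 then cos (phi t.1) else - sin (phi t.1).
pose yy := fun t : T => if t.2 then sin (phi t.1) else cos (phi t.1).
pose t0 : T := (ord0, true).
have hxy : forall t, xx t ^+ 2 + yy t ^+ 2 = 1.
  by move=> [i [|]]; rewrite /xx /yy /= ?sqrrN ?cos2Dsin2 // addrC cos2Dsin2.
have ha0 : a t0 = lam ord0 by [].
have hy0 : yy t0 = 0 by rewrite /yy /= hs0.
have hlt : forall t, t != t0 -> a t < lam ord0.
  move=> [i [|]] ht; rewrite /a /=; last exact: hlam_top.
  by apply: hlam_uniq; apply: contraNneq ht => ->.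
have [t1 [Pt1 ht1]] := @fin_argmax R T (fun t => t != t0) a (ord0, false) isT.
pose dl := lam ord0 - a t1.
have hd : 0 < dl by rewrite subr_gt0; exact: hlt.
have hgap : forall t, t != t0 -> a t <= lam ord0 - dl.
  by move=> t ht; rewrite /dl opprB addrCA subrr addr0; exact: ht1.
have Py : yy (ord0, false) != 0 by rewrite /yy /= hc0 oner_eq0.
have [ts [Pts hts]] := @fin_argmax R T (fun t => yy t != 0) a (ord0, false) Py.
pose c := a ts.
have [m0 [hpos [cv1 cv2 cv3 cv4]]] :=
  @asym_main R T a xx yy t0 ts (lam ord0) dl c hxy ha0 hy0 hd hgap Pts erefl hts.
exists (lam ord0 *: Pcs 1 0 + c *: Pcs (- 1) (- 0)).
split; last first.
  move=> z [hz hzmax].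
  have nu : forall i, (uvec (phi i) ord0 ord0) ^+ 2 + (uvec (phi i) ord_max ord0) ^+ 2 = 1.
    by move=> i; rewrite uvec0 uvec1 cos2Dsin2.
  have nv : forall i, (vvec (phi i) ord0 ord0) ^+ 2 + (vvec (phi i) ord_max ord0) ^+ 2 = 1.
    by move=> i; rewrite vvec0 vvec1 sqrrN addrC cos2Dsin2.
  have c1 : forall w, candidate lam mu phi w -> exists t, yy t != 0 /\ w = a t.
    move=> w [[i [hi [hal ->]]]|[i [hal ->]]].
      exists (i, true); split => //; rewrite /yy /=; apply/eqP => h; apply: hal.
      by apply: (proj2 (aligned_iff _ _ (nu i))); rewrite uvec1.
    exists (i, false); split => //; rewrite /yy /=; apply/eqP => h; apply: hal.
    by apply: (proj2 (aligned_iff _ _ (nv i))); rewrite vvec1.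
  have c2 : forall t, yy t != 0 -> candidate lam mu phi (a t).
    move=> [i [|]] hy; [left|right]; exists i.
      split; first by apply/eqP => hi; move: hy; rewrite /yy /= hi hs0 eqxx.
      split => //; move=> /(proj1 (aligned_iff _ _ (nu i))); rewrite uvec1 => h.
      by move: hy; rewrite /yy /= h eqxx.
    split => //; move=> /(proj1 (aligned_iff _ _ (nv i))); rewrite vvec1 => h.
    by move: hy; rewrite /yy /= h eqxx.
  have hzc : z = c.
    apply/eqP; rewrite eq_le; apply/andP; split.
      by have [t [ht ->]] := c1 z hz; exact: hts.
    exact: hzmax _ (c2 _ Pts).
  rewrite hzc; apply: colext; rewrite !mxE sum2 !mxE /=; lra.
pose Mm := fun m : nat => \sum_i expm (m%:R *: X i).
have hexp : forall (m : nat) i, expm (m%:R *: X i) =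
    expR (m%:R * lam i) *: Pcs (cu (phi i)) (su (phi i))
  + expR (m%:R * mu i) *: Pcs (- cu (phi i)) (- su (phi i)).
  move=> m i; rewrite hspec uu vv scalerDr !scalerA.
  by apply: expm_psys; apply: Pcs_psys; exact: cs_unit.
have hpair : forall (G : T -> R), \sum_(t : T) G t = \sum_i (G (i, true) + G (i, false)).
  move=> G; rewrite (eq_bigr (fun p : T => G (p.1, p.2))); last by move=> [].
  rewrite -(pair_bigA _ (fun i b => G (i, b))) /=.
  by apply: eq_bigr => i _; rewrite big_bool.
have eA : forall m, Mm m ord0 ord0 = AA R T a xx m.
  move=> m; rewrite /Mm summxE /AA hpair; apply: eq_bigr => i _.
  have [e _ _ _] := ent _ (phi i) (expR (m%:R * lam i)) (expR (m%:R * mu i)).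
  by rewrite hexp e.
have eB : forall m, Mm m ord0 ord_max = BB R T a xx yy m.
  move=> m; rewrite /Mm summxE /BB hpair; apply: eq_bigr => i _.
  have [_ e _ _] := ent _ (phi i) (expR (m%:R * lam i)) (expR (m%:R * mu i)).
  by rewrite hexp e.
have eB' : forall m, Mm m ord_max ord0 = BB R T a xx yy m.
  move=> m; rewrite /Mm summxE /BB hpair; apply: eq_bigr => i _.
  have [_ _ e _] := ent _ (phi i) (expR (m%:R * lam i)) (expR (m%:R * mu i)).
  by rewrite hexp e.
have eC : forall m, Mm m ord_max ord_max = CC R T a yy m.
  move=> m; rewrite /Mm summxE /CC hpair; apply: eq_bigr => i _.
  have [_ _ _ e] := ent _ (phi i) (expR (m%:R * lam i)) (expR (m%:R * mu i)).
  by rewrite hexp e.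
have hlog : forall m, (m0 <= m)%N ->
  (m%:R)^-1 *: logm (Mm m) =
    (ln (tp R T a xx yy m) / m%:R) *:
       Pcs (hh R T a xx yy m / rr R T a xx yy m) (BB R T a xx yy m / rr R T a xx yy m)
  + (ln (tm R T a xx yy m) / m%:R) *:
       Pcs (- (hh R T a xx yy m / rr R T a xx yy m)) (- (BB R T a xx yy m / rr R T a xx yy m)).
  move=> m hm; have [r0 tm0] := hpos m hm.
  have tp0 : 0 < tp R T a xx yy m.
    by move: tm0 r0; rewrite /tp /tm; lra.
  have [hcs hM] := @spec_formula2 R (Mm m) _ _ _ (eA m) (eB m) (eB' m) (eC m) (lt0r_neq0 r0).
  rewrite (@logm_char R _ _ _ _ _ hcs tp0 tm0 hM).
  by rewrite scalerDr !scalerA ![_^-1 * _]mulrC.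
apply: (cvg_trans _ (cvgD (cvgZ cv1 (@Pcs_cvg R _ _ _ _ cv3 cv4))
                      (cvgZ cv2 (@Pcs_cvg R _ _ _ _ (cvgN cv3) (cvgN cv4))))).
apply: near_eq_cvg; near=> m.
rewrite /= hlog //.
near: m; exact: nbhs_infty_ge.
Unshelve. all: by end_near.
Qed.
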